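(* Fix $\alpha\in(0,1/2)$ and $q_1,q_3\in(0,1)$. Define $m^*(3/4,3/4)=16\alpha$, $m^*(3/4,1/4)=m^*(1/4,3/4)=\frac{8(1-2\alpha)}{3}$, $m^*(1/4,1/4)=\frac{16\alpha}{9}$, $m^*=\frac{16(4\alpha+3)}{9}$, $\overline{q}^*=\frac{8\alpha+3}{8\alpha+6}$, $\overline{\lambda}^*=1/m^*$, $$\overline{q}=\frac{1}{m^*}\Big[\big(m^*(\tfrac34,\tfrac34)+m^*(\tfrac34,\tfrac14)\big)q_3+\big(m^*(\tfrac14,\tfrac34)+m^*(\tfrac14,\tfrac14)\big)q_1\Big],$$ $$\overline{\lambda}=\frac{1}{m^*}\Big(m^*(\tfrac34,\tfrac34)\tfrac{1-q_3}{4}+m^*(\tfrac34,\tfrac14)\tfrac{3(1-q_3)}{4}+m^*(\tfrac14,\tfrac34)\tfrac{1-q_1}{4}+m^*(\tfrac14,\tfrac14)\tfrac{3(1-q_1)}{4}\Big).$$ If $\frac{(4\alpha-3)q_1+8\alpha+3}{12\alpha+3}<q_3<\frac{5-2q_1}{6}$ and either $q_1<1/4<\alpha$ or $\alpha<1/4<q_1$ holds, then $\overline{q}>\overline{q}^*$ and $\overline{\lambda}>\overline{\lambda}^*$.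
   Context: Interpretation: $m^*(x,e)$ is the steady-state mass of users of type $(x,e)$ under the status quo algorithm with recommendation quality $q^*(x)=x$ and per-period churn probability $(1-q(x))(1-e)$; $\overline{q},\overline{\lambda}$ are the ARQ and churn rate observed in a one-period A/B experiment where the treatment (quality $q_1$ for segment $x=1/4$, $q_3$ for $x=3/4$) is applied to the status quo steady-state population; $\overline{q}^*,\overline{\lambda}^*$ are the status quo's values. *)

(* Defs.v *)
From Stdlib Require Import Reals Lra.
Open Scope R_scope.

(* Steady-state masses under the status quo, indexed by (x, e). *)
Definition m33 (a : R) : R := 16 * a.
Definition m31 (a : R) : R := 8 * (1 - 2 * a) / 3.
Definition m13 (a : R) : R := 8 * (1 - 2 * a) / 3.
Definition m11 (a : R) : R := 16 * a / 9.
Definition mstar (a : R) : R := 16 * (4 * a + 3) / 9.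

Definition qbar_star (a : R) : R := (8 * a + 3) / (8 * a + 6).
Definition lbar_star (a : R) : R := 1 / mstar a.

Definition qbar (a q1 q3 : R) : R :=
  / mstar a * ((m33 a + m31 a) * q3 + (m13 a + m11 a) * q1).

Definition lbar (a q1 q3 : R) : R :=
  / mstar a * (m33 a * ((1 - q3) / 4) + m31 a * (3 * (1 - q3) / 4)
              + m13 a * ((1 - q1) / 4) + m11 a * (3 * (1 - q1) / 4)).

(* Main.v *)
Require Import Defs.
From Stdlib Require Import Reals Lra Psatz.
Open Scope R_scope.

Theorem lemma1 (a q1 q3 : R)
  (ha : 0 < a < 1 / 2) (hq1 : 0 < q1 < 1) (hq3 : 0 < q3 < 1)
  (hlo : ((4 * a - 3) * q1 + 8 * a + 3) / (12 * a + 3) < q3)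
  (hhi : q3 < (5 - 2 * q1) / 6)
  (hcase : (q1 < 1 / 4 /\ 1 / 4 < a) \/ (a < 1 / 4 /\ 1 / 4 < q1)) :
  qbar a q1 q3 > qbar_star a /\ lbar a q1 q3 > lbar_star a.
Proof.
  assert (hd : 0 < 12 * a + 3) by lra.
  assert (H1 : (4 * a - 3) * q1 + 8 * a + 3 < q3 * (12 * a + 3)).
  { apply (Rmult_lt_compat_r (12 * a + 3)) in hlo; [|lra].
    unfold Rdiv in hlo. rewrite Rmult_assoc, Rinv_l in hlo; lra. }
  assert (H2 : (4 * a - 3) * q1 + 8 * a + 3 < q3 * (6 * a + 6)) by nra.
  assert (hm : 0 < 2 * (4 * a + 3)) by lra.
  split.
  - assert (E1 : qbar a q1 q3 = (3 * (4 * a + 1) * q3 + (3 - 4 * a) * q1) / (2 * (4 * a + 3))).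
    { unfold qbar, mstar, m33, m31, m13, m11. field. lra. }
    assert (E2 : qbar_star a = (8 * a + 3) / (2 * (4 * a + 3))).
    { unfold qbar_star. field. lra. }
    rewrite E1, E2. unfold Rdiv, Rgt. apply Rmult_lt_compat_r.
    + apply Rinv_0_lt_compat; lra.
    + lra.
  - assert (E1 : lbar a q1 q3 = (2 * (1 - q3) + 2 * (1 - q1) / 3) / (16 * (4 * a + 3) / 9)).
    { unfold lbar, mstar, m33, m31, m13, m11. field. lra. }
    assert (E2 : lbar_star a = 1 / (16 * (4 * a + 3) / 9)).
    { reflexivity. }
    rewrite E1, E2. unfold Rdiv at 1 3, Rgt. apply Rmult_lt_compat_r.
    + apply Rinv_0_lt_compat; lra.
    + lra.
Qed.
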